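(* Assume (A1) and let $S(x,t)=\inf_{v\in\mathbb{R}^n}\{J(x-tv)+tH^*(v)\}$ for $x\in\mathbb{R}^n$, $t>0$. Let $v^{(0)}\in\mathrm{int}\,\mathrm{dom}\,H^*$ and $d\in\mathrm{dom}\,J$. Then $$\lim_{t\to+\infty}\frac{S(d+tv^{(0)},t)}{t}=H^*(v^{(0)}).$$ If moreover $0\in\mathrm{dom}\,J$ and, for $t>0$, $F(x,t)=\inf_{v\in\mathrm{int}\,\mathrm{dom}\,H^*}\{tD_{H^*}(x/t,v)+J^*(\nabla H^*(v))\}$, then $$\lim_{t\to+\infty}\frac{F(tv^{(0)},t)}{t}=0.$$
   Context: $\Gamma_0(\mathbb{R}^n)$ denotes the set of proper, convex, lower semicontinuous functions $\mathbb{R}^n\to\mathbb{R}\cup\{+\infty\}$; $f^*$ is the Legendre–Fenchel transform. A function $g$ is 1-coercive if $g(x)/\|x\|\to+\infty$ as $\|x\|\to\infty$. A function $f\in\Gamma_0(\mathbb{R}^n)$ is Legendre if: $\mathrm{int}\,\mathrm{dom}\,f\neq\emptyset$; $f$ is differentiable on $\mathrm{int}\,\mathrm{dom}\,f$; $\partial f(x)=\emptyset$ for $x\in\mathrm{dom}\,f\setminus\mathrm{int}\,\mathrm{dom}\,f$ and $\partial f(x)=\{\nabla f(x)\}$ on $\mathrm{int}\,\mathrm{dom}\,f$; and $f$ is strictly convex on $\mathrm{int}\,\mathrm{dom}\,f$. $D_f(x,u)=f(x)-f(u)-\langle\nabla f(u),x-u\rangle$. Assumption (A1): $J,H\in\Gamma_0(\mathbb{R}^n)$,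 $J$ is 1-coercive, and $H$ is a Legendre function. *)

(* Defs.v *)
(* R^n is modelled by row vectors 'rV[R]_n. *)
From HB Require Import structures.
From mathcomp Require Import all_boot all_order all_algebra.
From mathcomp Require Import all_classical all_reals all_analysis.
Set Implicit Arguments. Unset Strict Implicit. Unset Printing Implicit Defensive.
Import Order.TTheory GRing.Theory Num.Theory.
Import numFieldNormedType.Exports.
Local Open Scope classical_set_scope.
Local Open Scope ring_scope.

Section ConvexDefs.
Variables (R : realType) (n : nat).
Notation V := 'rV[R]_n.

Definition dotv (u v : V) : R := \sum_(i < n) u ord0 i * v ord0 i.
Definition enorm (u : V) : R := Num.sqrt (dotv u u).

Local Open Scope ereal_scope.

Definition edom (f : V -> \bar R) : set V := [set x | f x < +oo].

Definition proper_fun (f : V -> \bar R) :=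
  (forall x, f x != -oo) /\ (exists x, f x < +oo).

Definition econvex (f : V -> \bar R) :=
  forall (x y : V) (l : R), (0 < l < 1)%R ->
    f (l *: x + (1 - l) *: y)%R <= l%:E * f x + (1 - l)%R%:E * f y.

Definition Gamma0 (f : V -> \bar R) :=
  [/\ proper_fun f, econvex f & lower_semicontinuous f].

Definition lfconj (f : V -> \bar R) (y : V) : \bar R :=
  ereal_sup [set (dotv x y)%:E - f x | x in [set: V]].

Definition coercive1 (f : V -> \bar R) :=
  forall M : R, exists r : R, forall x : V,
    (r <= enorm x)%R -> M%:E <= f x * ((enorm x)^-1)%:E.

(* real-valued version of f (meaningful on the domain) *)
Definition freal (f : V -> \bar R) : V -> R := fun x => fine (f x).

Definition grad (f : V -> \bar R) (u : V) : V :=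
  \row_(i < n) ('d (freal f) u (delta_mx ord0 i : V)).

Definition subdiff (f : V -> \bar R) (x : V) : set V :=
  [set g | edom f x /\ forall y, f x + (dotv g (y - x)%R)%:E <= f y].

Definition strictly_convex_on (f : V -> \bar R) (A : set V) :=
  forall (x y : V) (l : R), A x -> A y -> x != y -> (0 < l < 1)%R ->
    f (l *: x + (1 - l) *: y)%R < l%:E * f x + (1 - l)%R%:E * f y.

Definition legendre (f : V -> \bar R) :=
  Gamma0 f /\
  [/\ interior (edom f) !=set0,
      (forall x, interior (edom f) x -> differentiable (freal f) x),
      (forall x, edom f x -> ~ interior (edom f) x -> subdiff f x = set0),
      (forall x, interior (edom f) x -> subdiff f x = [set grad f x]) &
      strictly_convex_on f (interior (edom f))].

Definition bregman (f : V -> \bar R) (x u : V) : \bar R :=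
  f x - f u - (dotv (grad f u) (x - u)%R)%:E.

End ConvexDefs.

(* Main.v *)
Require Import Defs.
From HB Require Import structures.
From mathcomp Require Import all_boot all_order all_algebra.
From mathcomp Require Import all_classical all_reals all_analysis.
From mathcomp Require Import ring lra.
Import Order.TTheory GRing.Theory Num.Theory.
Import numFieldNormedType.Exports.
Local Open Scope classical_set_scope.
Local Open Scope ring_scope.
Set Implicit Arguments. Unset Strict Implicit. Unset Printing Implicit Defensive.
Section A.
Variables (R : realType) (n : nat).
Notation V := 'rV[R]_n.
Implicit Types (x y z p q : V).

Lemma dotvC x y : dotv x y = dotv y x.
Proof. by apply: eq_bigr => i _; rewrite mulrC. Qed.
Lemma dotvDr x y z : dotv x (y + z) = dotv x y + dotv x z.
Proof. by rewrite /dotv -big_split; apply: eq_bigr => i _; rewrite mxE mulrDr. Qed.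
Lemma dotvDl x y z : dotv (y + z) x = dotv y x + dotv z x.
Proof. by rewrite dotvC dotvDr !(dotvC x). Qed.
Lemma dotvZr (a : R) x y : dotv x (a *: y) = a * dotv x y.
Proof. by rewrite /dotv mulr_sumr; apply: eq_bigr => i _; rewrite mxE; ring. Qed.
Lemma dotvZl (a : R) x y : dotv (a *: y) x = a * dotv y x.
Proof. by rewrite dotvC dotvZr dotvC. Qed.
Lemma dotvNr x y : dotv x (- y) = - dotv x y.
Proof. by rewrite -scaleN1r dotvZr mulN1r. Qed.
Lemma dotvNl x y : dotv (- y) x = - dotv y x.
Proof. by rewrite dotvC dotvNr dotvC. Qed.
Lemma dotvBr x y z : dotv x (y - z) = dotv x y - dotv x z.
Proof. by rewrite dotvDr dotvNr. Qed.
Lemma dotvBl x y z : dotv (y - z) x = dotv y x - dotv z x.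
Proof. by rewrite dotvDl dotvNl. Qed.
Lemma dotv0r x : dotv x 0 = 0.
Proof. by rewrite /dotv big1 // => i _; rewrite mxE mulr0. Qed.
Lemma dotv0l x : dotv 0 x = 0.
Proof. by rewrite dotvC dotv0r. Qed.
Lemma dotv_delta x (i : 'I_n) : dotv x (delta_mx ord0 i) = x ord0 i.
Proof.
rewrite /dotv (bigD1 i) //= big1 ?addr0; first by rewrite mxE !eqxx mulr1.
by move=> j ji; rewrite mxE (negbTE ji) andbF mulr0.
Qed.

Lemma coord_le_norm x (i : 'I_n) : `|x ord0 i| <= `|x|.
Proof.
rewrite -[`|x|]/(mx_norm x) mx_normrE; apply/bigmax_geP; right.
by exists (ord0, i).
Qed.

Lemma norm_le_coord x (M : R) : 0 <= M -> (forall i, `|x ord0 i| <= M) -> `|x| <= M.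
Proof.
move=> M0 H; rewrite -[`|x|]/(mx_norm x) mx_normrE; apply/bigmax_leP; split => //.
by move=> [a b] _ /=; rewrite (ord1 a); exact: H.
Qed.

Definition sabs x : R := \sum_(i < n) `|x ord0 i|.
Lemma sabs_ge0 x : 0 <= sabs x.
Proof. by apply: sumr_ge0 => i _. Qed.

Lemma dot_bound x y : `|dotv x y| <= sabs x * `|y|.
Proof.
rewrite /dotv /sabs mulr_suml; apply: le_trans (ler_norm_sum _ _ _) _.
apply: ler_sum => i _; rewrite normrM; apply: ler_wpM2l => //; exact: coord_le_norm.
Qed.

Definition dotl (q : V) : V -> R := fun x => dotv q x.
Lemma dotl_is_linear (q : V) : linear (dotl q).
Proof.
move=> a x y; rewrite /dotl /dotv /= scaler_sumr -big_split /=; apply: eq_bigr => i _.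
rewrite !mxE /GRing.scale /=; ring.
Qed.
HB.instance Definition _ (q : V) := GRing.isLinear.Build R V R *:%R (dotl q) (dotl_is_linear q).

Lemma dotl_continuous (q : V) : continuous (dotl q).
Proof.
apply: bounded_linear_continuous; apply/linear_boundedP.
near=> r => x; apply: le_trans (dot_bound q x) _; apply: ler_wpM2r => //.
Unshelve. all: by end_near. Qed.

Lemma dot_cont_near (w q : V) (e : R) : 0 < e ->
  \forall y \near q, `|dotv y w - dotv q w| < e.
Proof.
move=> e0; have /cvgrPdist_lt /(_ e e0) := @dotl_continuous w q.
apply: filterS => y /=.
by rewrite /dotl -normrN opprB (dotvC w y) (dotvC w q).
Qed.

End A.
Module Mod_B.
Local Open Scope ereal_scope.
Section B.
Variables (R : realType) (n : nat).
Notation V := 'rV[R]_n.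

Lemma min_seq_le (s : seq (V * R)) (c0 : R) (i : V * R) : i \in s ->
  (\big[Order.min/c0]_(j <- s) j.2 <= i.2)%R.
Proof.
elim: s => // j s IH; rewrite inE big_cons => /orP[/eqP <-|/IH h].
  by rewrite ge_min lexx.
by rewrite ge_min h orbT.
Qed.

Lemma lsc_compact_lb (f : V -> \bar R) (K : set V) (a : \bar R) :
  lower_semicontinuous f -> compact K -> a != +oo ->
  (forall z, K z -> exists c : R, a < c%:E /\ c%:E < f z) ->
  exists b : R, a < b%:E /\ forall z, K z -> b%:E < f z.
Proof.
move=> lsc cK ainf H.
have [c0 ac0] : exists c0 : R, a < c0%:E.
  case: a H ainf => [r _ _| // | _ _].
    by exists (r + 1)%R; rewrite lte_fin ltrDl.
  by exists 0%R; rewrite ltNyr.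
pose D := [set ic : V * R | K ic.1 /\ a < ic.2%:E /\ ic.2%:E < f ic.1].
pose g := fun ic : V * R => [set y | ic.2%:E < f y].
have := cK; rewrite compact_cover => /(_ _ D g).
case.
- by move=> i _; exact: (proj1 (lower_semicontinuousP f) lsc i.2).
- move=> z Kz; have [c [ac cf]] := H z Kz.
  by exists (z, c) => //.
move=> D' D'D cov; exists (\big[Order.min/c0]_(j <- finmap.enum_fset D') j.2)%R; split.
- rewrite big_seq; elim/big_rec: _ => // j x /D'D; rewrite inE => -[_ [aj _]] ax.
  by case: (leP j.2 x) => _; rewrite ?min_l ?min_r //.
- move=> z /cov [j /= jD' gj]; apply: le_lt_trans gj.
  by rewrite lee_fin; exact: min_seq_le.
Qed.
End B.
End Mod_B.
Import Mod_B.
Module Mod_C.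
Section C.
Variables (R : realType) (n : nat).
Notation V := 'rV[R]_n.

Lemma closed_ball_compact (c : V) (r : R) : 0 < r -> compact (closed_ball c r).
Proof.
move=> r0; apply: bounded_closed_compact; last exact: closed_ball_closed.
rewrite /bounded_set /= /bounded_near.
near=> M => x; rewrite closed_ballE // /closed_ball_ /= => cx.
have : `|x| <= `|c| + r.
  have -> : x = c - (c - x) by rewrite opprB addrC subrK.
  by apply: le_trans (ler_normB _ _) _; rewrite lerD2l.
move/le_trans; apply; near: M; apply: nbhs_pinfty_ge; exact: num_real.
Unshelve. all: by end_near. Qed.

Lemma in_closed_ball (c x : V) (r : R) : 0 < r -> closed_ball c r x <-> `|c - x| <= r.
Proof. by move=> r0; rewrite closed_ballE. Qed.

Lemma norm_le_enorm (x : V) : `|x| <= enorm x.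
Proof.
apply: norm_le_coord; first exact: sqrtr_ge0.
move=> i; rewrite -sqrtr_sqr /enorm ler_sqrt; last first.
  by rewrite /dotv sumr_ge0 // => j _; rewrite -expr2 sqr_ge0.
rewrite /dotv (bigD1 i) //= expr2 lerDl sumr_ge0 // => j _.
by rewrite -expr2 sqr_ge0.
Qed.

Local Open Scope ereal_scope.

Lemma proper_ninf (f : V -> \bar R) x : proper_fun f -> f x != -oo.
Proof. by case. Qed.

Lemma Gamma0_lb_ball (J : V -> \bar R) (c : V) (r : R) : Gamma0 J -> (0 < r)%R ->
  exists b : R, forall z, (`|c - z| <= r)%R -> b%:E < J z.
Proof.
move=> [pJ _ lJ] r0.
have := @lsc_compact_lb R n J (closed_ball c r) -oo lJ (@closed_ball_compact c r r0) isT.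
case.
  move=> z _; case E: (J z) => [j| |].
  - by exists (j - 1)%R; rewrite ltNyr lte_fin ltrBlDr ltrDl.
  - by exists 0%R; rewrite ltNyr ltry.
  - by have := proper_ninf z pJ; rewrite E.
move=> b [_ Hb]; exists b => z cz; apply: Hb; exact/in_closed_ball.
Qed.

Lemma conj_finite (J : V -> \bar R) (p : V) : Gamma0 J -> coercive1 J -> lfconj J p < +oo.
Proof.
move=> GJ cJ; have [pJ _ _] := GJ.
have [r Hr] := cJ (sabs p + 1)%R.
pose rho := (`|r| + 1)%R.
have rho0 : (0 < rho)%R by rewrite /rho ltr_wpDl.
have [b Hb] := @Gamma0_lb_ball J 0 rho GJ rho0.
apply: (@le_lt_trans _ _ (Order.max (sabs p * rho - b)%R 0%R)%:E); last exact: ltry.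
apply: ge_ereal_sup => _ [x _ <-].
case E: (J x) => [j| |]; last by have := proper_ninf x pJ; rewrite E.
  2: by rewrite addeNy leNye.
rewrite -EFinD lee_fin le_max; apply/orP.
have hdot : (dotv x p <= sabs p * `|x|)%R.
  by rewrite dotvC; apply: le_trans (ler_norm _) (dot_bound _ _).
have [xs|xl] := leP (`|x|)%R rho.
- left; apply: lerB.
    by apply: le_trans hdot _; apply: ler_wpM2l => //; exact: sabs_ge0.
  by have := Hb x; rewrite sub0r normrN => /(_ xs); rewrite E lte_fin => /ltW.
- right; rewrite subr_le0.
  have ex : (rho < enorm x)%R by apply: lt_le_trans xl (norm_le_enorm x).
  have e0 : (0 < enorm x)%R by apply: lt_trans ex.
  have : (r <= enorm x)%R.
    by apply: ltW; apply: le_lt_trans ex; rewrite /rho (le_trans (ler_norm r)) // lerDl.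
  move/Hr; rewrite E lee_pdivlMr // -EFinM lee_fin => hj.
  apply: le_trans hdot _; apply: le_trans hj.
  apply: le_trans (_ : (sabs p + 1) * `|x| <= _)%R.
    by apply: ler_wpM2r => //; rewrite lerDl.
  by apply: ler_wpM2l; [rewrite addr_ge0 ?sabs_ge0 | exact: norm_le_enorm].
Qed.
End C.
End Mod_C.
Import Mod_C.
Module Mod_D.
Local Open Scope ereal_scope.
Section D.
Variables (R : realType) (n : nat).
Notation V := 'rV[R]_n.

Lemma ereal_between (a : R) (y : \bar R) : a%:E < y -> exists c : R, (a < c)%R /\ c%:E < y.
Proof.
case: y => [y| |] //.
- rewrite lte_fin => ay; exists ((a + y) / 2)%R; rewrite lte_fin; split.
  + by rewrite ltr_pdivlMr // mulrDr mulr1 ltrD2l.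
  + by rewrite ltr_pdivrMr // mulrDr mulr1 ltrD2r.
- by move=> _; exists (a + 1)%R; rewrite ltrDl ltry.
Qed.

Lemma fenchel_young (H : V -> \bar R) (q w : V) :
  (dotv q w)%:E - H q <= lfconj H w.
Proof. by apply: ereal_sup_ubound; exists q. Qed.

Lemma conj_gt_ninf (H : V -> \bar R) (w : V) : proper_fun H -> -oo < lfconj H w.
Proof.
move=> [pn [x0 x0f]]; apply: (@lt_le_trans _ _ ((dotv x0 w)%:E - H x0)); last first.
  exact: fenchel_young.
move: (pn x0) x0f; case: (H x0) => [h| |] //= _ _.
by rewrite -EFinB ltNyr.
Qed.

Lemma conj_fin (H : V -> \bar R) (w : V) : proper_fun H -> edom (lfconj H) w ->
  lfconj H w \is a fin_num.
Proof.
move=> pH wd; rewrite fin_numElt; apply/andP; split => //; exact: conj_gt_ninf.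
Qed.

Lemma FY_real (H : V -> \bar R) (q w : V) : proper_fun H -> edom (lfconj H) w ->
  ((dotv q w - fine (lfconj H w))%:E <= H q).
Proof.
move=> pH wd; have fw := conj_fin pH wd.
have FY := fenchel_young H q w; rewrite -(fineK fw) in FY.
have hq := proper_ninf q pH.
case E: (H q) => [r| |]; rewrite E in FY hq => //; last by rewrite leey.
by rewrite -EFinB lee_fin in FY; rewrite lee_fin; lra.
Qed.

Lemma phi_lsc (H : V -> \bar R) (w : V) : lower_semicontinuous H ->
  lower_semicontinuous (fun q => H q - (dotv q w)%:E).
Proof.
move=> lH x a /ereal_between [c [ac cH]].
have : ((c + dotv x w)%:E < H x).
  case E: (H x) cH => [h| |].
  - by rewrite -EFinB !lte_fin => ?; lra.
  - by move=> _; rewrite ltry.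
  - by rewrite -EFinN addNye.
case/lH => U Ux HU.
exists (U `&` [set y | `|dotv y w - dotv x w| < c - a]%R).
  apply: filterI => //; apply: dot_cont_near; by rewrite subr_gt0.
move=> y [/HU Uy /= dy]; case E: (H y) Uy => [h| |]; last by [].
  2: by move=> _; rewrite ltry.
rewrite -EFinB !lte_fin => hy.
move: dy; rewrite ltr_norml => /andP[dy1 dy2]; lra.
Qed.
End D.
End Mod_D.
Import Mod_D.
Module Mod_D2.
Local Open Scope ereal_scope.
Section D2.
Variables (R : realType) (n : nat).
Notation V := 'rV[R]_n.

Lemma interior_ball (A : set V) (w : V) : interior A w ->
  exists2 del : R, (0 < del)%R & forall y, (`|y - w| <= del)%R -> A y.
Proof.
move=> /nbhs_ballP [e e0 Be]; move: Be; rewrite -ball_normE => Be.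
exists (e / 2)%R; first by rewrite divr_gt0.
move=> y yw; apply: Be; rewrite /ball_ /= -normrN opprB.
by apply: le_lt_trans yw _; rewrite ltr_pdivrMr // ltr_pMr // ltr1n.
Qed.

Lemma norm_scale_delta (del : R) (i : 'I_n) : (0 <= del)%R ->
  (`|del *: (delta_mx ord0 i : V)| <= del)%R.
Proof.
move=> d0; apply: norm_le_coord => // j; rewrite !mxE.
by case: (_ && _); rewrite ?mulr1 ?mulr0 ?normr0 // ger0_norm.
Qed.

Lemma argmin_exists (H : V -> \bar R) (w : V) : Gamma0 H -> interior (edom (lfconj H)) w ->
  exists q, H q = (dotv q w - fine (lfconj H w))%:E.
Proof.
move=> GH wi; have [pH _ lH] := GH.
have wd : edom (lfconj H) w := interior_subset wi.
set s := fine (lfconj H w).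
have [del del0 Bd] := interior_ball wi.
pose wp (i : 'I_n) : V := (w + del *: (delta_mx ord0 i : V))%R.
pose wm (i : 'I_n) : V := (w - del *: (delta_mx ord0 i : V))%R.
have wpd (i : 'I_n) : edom (lfconj H) (wp i).
  by apply: Bd; rewrite /wp addrC addKr norm_scale_delta // ltW.
have wmd (i : 'I_n) : edom (lfconj H) (wm i).
  by apply: Bd; rewrite /wm addrC addKr normrN norm_scale_delta // ltW.
pose C := (\sum_i (`|fine (lfconj H (wp i))| + `|fine (lfconj H (wm i))|))%R.
have termC (i : 'I_n) : (`|fine (lfconj H (wp i))| <= C /\ `|fine (lfconj H (wm i))| <= C)%R.
  have : (`|fine (lfconj H (wp i))| + `|fine (lfconj H (wm i))| <= C)%R.
    rewrite /C (bigD1 i) //= lerDl; apply: sumr_ge0 => j _.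
    by rewrite addr_ge0.
  by move=> h; split; apply: le_trans h; rewrite ?lerDl ?lerDr normr_ge0.
have coer (q : V) (i : 'I_n) : ((dotv q w + del * `|q ord0 i| - C)%:E <= H q).
  have h1 := FY_real q pH (wpd i); have h2 := FY_real q pH (wmd i).
  move: h1 h2; rewrite /wp /wm dotvDr dotvBr !dotvZr !dotv_delta.
  have [c1 c2] := termC i.
  have a1 := ler_norm (fine (lfconj H (w + del *: delta_mx ord0 i))).
  have a2 := ler_norm (fine (lfconj H (w - del *: delta_mx ord0 i))).
  case E: (H q) => [h| |]; rewrite ?leey // ?lee_fin.
  - move=> h1 h2; have [qi0|qi0] := leP 0%R (q ord0 i).
      by rewrite ger0_norm //; lra.
    by rewrite ltr0_norm //; lra.
pose rho := ((`|1 - s| + `|C|) / del + 1)%R.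
have rho0 : (0 < rho)%R.
  by rewrite /rho ltr_wpDl // divr_ge0 // ?addr_ge0 // ltW.
have inK (q : V) : H q <= (dotv q w - s + 1)%:E -> (`|q| <= rho)%R.
  move=> hq; apply: norm_le_coord; first exact: ltW.
  move=> i; have := coer q i.
  case E: (H q) hq => [h| |]; rewrite ?lee_fin ?leey //.
  - move=> hq hc; rewrite /rho.
    have : (del * `|q ord0 i| <= `|1 - s| + `|C|)%R.
      have := ler_norm (1 - s)%R; have := ler_norm C; lra.
    rewrite -ler_pdivlMl // => hh; apply: le_trans hh _.
    by rewrite mulrC lerDl.
case: (pselect (exists q, H q = (dotv q w - s)%:E)) => // none.
exfalso.
have gt (q : V) : (- s)%:E < H q - (dotv q w)%:E.
  have := FY_real q pH wd; rewrite -/s.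
  case E: (H q) => [h| |]; rewrite ?lee_fin //.
  - rewrite -EFinB lte_fin => hh; rewrite lt_neqAle; apply/andP; split; last by lra.
    apply/negP => /eqP hs; apply: none; exists q; rewrite E; congr (_%:E); lra.
  - by rewrite ltry.
have [b [sb Hb]] := @lsc_compact_lb R n (fun q => H q - (dotv q w)%:E)
   (closed_ball (0%R : V) rho) (- s)%:E (@phi_lsc _ _ H w lH) (@closed_ball_compact _ _ (0%R : V) rho rho0) isT
   (fun z _ => ereal_between (gt z)).
rewrite lte_fin in sb.
pose eta := Order.min (b + s)%R 1%R.
have eta0 : (0 < eta)%R by rewrite lt_min ltr01 andbT; lra.
have fw : lfconj H w \is a fin_num := conj_fin pH wd.
have [_ [q _ <-]] := ub_ereal_sup_adherent eta0 fw.
rewrite -/(lfconj H w) -(fineK fw) -/s.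
have etab : (eta <= b + s)%R by rewrite ge_min lexx.
have eta1 : (eta <= 1)%R by rewrite ge_min lexx orbT.
have [qK|qK] := leP (`|q|)%R rho.
- have := Hb q; rewrite (in_closed_ball _ _ rho0) sub0r normrN => /(_ qK).
  case E: (H q) => [h| |] //=.
  by rewrite -!EFinD !lte_fin => ??; lra.
- have : ~ (H q <= (dotv q w - s + 1)%:E) by move/inK; rewrite leNgt qK.
  case E: (H q) => [h| |] //=.
  by rewrite lee_fin -!EFinD lte_fin => ??; lra.
by have := proper_ninf q pH; rewrite E.
Qed.
End D2.
End Mod_D2.
Import Mod_D2.
Module Mod_E.
Local Open Scope ereal_scope.
Section E.
Variables (R : realType) (n : nat).
Notation V := 'rV[R]_n.

Lemma argmin_subdiff (H : V -> \bar R) (w q : V) : proper_fun H -> edom (lfconj H) w ->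
  H q = (dotv q w - fine (lfconj H w))%:E -> subdiff H q w.
Proof.
move=> pH wd Hq; split; first by rewrite /edom /= Hq ltry.
move=> y; rewrite Hq -EFinD; apply: le_trans (FY_real y pH wd).
by rewrite lee_fin dotvBr (dotvC w y) (dotvC w q); lra.
Qed.

Lemma argmin_interior (H : V -> \bar R) (w q : V) : legendre H -> edom (lfconj H) w ->
  H q = (dotv q w - fine (lfconj H w))%:E -> interior (edom H) q.
Proof.
move=> [[pH _ _] [_ _ L3 _ _]] wd Hq.
case: (pselect (interior (edom H) q)) => // nq.
have sd := argmin_subdiff pH wd Hq.
have qd : edom H q by rewrite /edom /= Hq ltry.
by have := L3 q qd nq; rewrite -subset0 => /(_ w sd).
Qed.

Lemma argmin_unique (H : V -> \bar R) (w q1 q2 : V) : legendre H -> edom (lfconj H) w ->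
  H q1 = (dotv q1 w - fine (lfconj H w))%:E ->
  H q2 = (dotv q2 w - fine (lfconj H w))%:E -> q1 = q2.
Proof.
move=> LH wd H1 H2; have [[pH _ _] [_ _ _ _ L5]] := LH.
have i1 := argmin_interior LH wd H1; have i2 := argmin_interior LH wd H2.
case: (eqVneq q1 q2) => // neq; exfalso.
have l01 : (0 < (2^-1 : R) < 1)%R.
  by rewrite invr_gt0 ltr0n /= invf_lt1 // ltr1n.
have := L5 q1 q2 (2^-1)%R i1 i2 neq l01.
set m := (2^-1 *: q1 + (1 - 2^-1) *: q2)%R.
have := FY_real m pH wd; rewrite H1 H2 -!EFinM -EFinD.
case: (H m) => [h| |] //=; rewrite ?lee_fin ?lte_fin.
rewrite /m dotvDl !dotvZl; lra.
Qed.
End E.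
End Mod_E.
Import Mod_E.
Module Mod_F.
Local Open Scope ereal_scope.
Section F.
Variables (R : realType) (n : nat).
Notation V := 'rV[R]_n.

Lemma sabs_le (x : V) : (sabs x <= (n%:R + 1) * `|x|)%R.
Proof.
rewrite mulrDl mul1r; apply: le_trans (_ : n%:R * `|x| <= _)%R; last by rewrite lerDl.
apply: le_trans (ler_sum _ (fun i _ => coord_le_norm x i)) _.
by rewrite sumr_const card_ord mulr_natl.
Qed.

Lemma arith_key (b sv sw lam A B C D h X Z N P m : R) :
  (b < h - Z)%R -> (h <= lam * (A - sw) + (1 - lam) * (D - sv))%R ->
  (lam * (C - sw) <= lam * (D - sv))%R ->
  X = (lam * A - lam * B - lam * C + lam * D)%R -> Z = (lam * B + (1 - lam) * D)%R ->
  (X <= N)%R -> (N <= P)%R -> (P < m)%R -> m = (b + sv)%R -> False.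
Proof. move=> *; nra. Qed.

Lemma half_nlt (e : R) : (0 < e)%R -> ~ (e < e / 2)%R.
Proof. by move=> ? ?; lra. Qed.

Lemma argmin_cont (H : V -> \bar R) (v qs : V) (e : R) : legendre H ->
  interior (edom (lfconj H)) v ->
  H qs = (dotv qs v - fine (lfconj H v))%:E -> (0 < e)%R ->
  exists2 del : R, (0 < del)%R & forall w q, (`|w - v| < del)%R ->
    edom (lfconj H) w -> H q = (dotv q w - fine (lfconj H w))%:E ->
    (`|q - qs| <= e)%R.
Proof.
move=> LH vi Hqs e0; have [[pH cH lH] _] := LH.
have vd : edom (lfconj H) v := interior_subset vi.
set sv := fine (lfconj H v).
pose S := closed_ball qs e `&` ~` ball qs (e / 2)%R.
have cS : compact S.
  apply: (subclosed_compact _ (@closed_ball_compact _ _ qs e e0)); last exact: subIsetl.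
  apply: closedI; first exact: closed_ball_closed.
  exact/open_closedC/ball_open.
have e20 : (0 < e / 2)%R by rewrite divr_gt0.
have hS z : S z -> exists c : R, (- sv < c)%R /\ c%:E < H z - (dotv z v)%:E.
  move=> [_ Sz]; apply: ereal_between.
  have := FY_real z pH vd; rewrite -/sv.
  case E: (H z) => [h| |] //=; last by rewrite ltry.
  rewrite -EFinD !lee_fin lte_fin => hh; rewrite lt_neqAle; apply/andP; split; last by lra.
  apply/negP => /eqP hs; apply: Sz.
  have -> : z = qs.
    apply: (argmin_unique LH vd _ Hqs); rewrite E; congr (_%:E); rewrite -/sv; lra.
  exact: ballxx.
have [b [sb Hb]] := @lsc_compact_lb R n (fun q => H q - (dotv q v)%:E) S (- sv)%:E
   (@phi_lsc _ _ H v lH) cS isT hS.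
rewrite lte_fin in sb.
pose m := (b + sv)%R.
have m0 : (0 < m)%R by rewrite /m; lra.
exists (m / ((n%:R + 1) * e))%R; first by rewrite divr_gt0 // mulr_gt0 // ltr_wpDl.
move=> w q hw wd Hq.
have [//|qe] := leP (`|q - qs|)%R e; exfalso.
set sw := fine (lfconj H w) in Hq.
set d := (`|q - qs|)%R.
have d0 : (0 < d)%R by apply: lt_trans qe.
pose lam := (e / d)%R.
have lam0 : (0 < lam)%R by rewrite divr_gt0.
have lam1 : (lam < 1)%R by rewrite ltr_pdivrMr // mul1r.
pose z := (lam *: q + (1 - lam) *: qs)%R.
have zq : (z - qs = lam *: (q - qs))%R.
  by apply/rowP => i; rewrite !mxE; ring.
have nz : (`|z - qs| = e)%R.
  by rewrite zq normrZ gtr0_norm // /lam divfK // gt_eqF.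
have Sz : S z.
  split; first by rewrite in_closed_ball // -normrN opprB nz.
  rewrite -ball_normE /ball_ /= -normrN opprB nz; exact: half_nlt.
have h1 := Hb z Sz.
have h2 := cH q qs lam (andb_true_intro (conj lam0 lam1)).
have h3 := FY_real qs pH wd; rewrite -/sw Hqs lee_fin in h3.
rewrite -/z Hq Hqs in h2.
have hb : (`|dotv (w - v) (z - qs)| <= (n%:R + 1) * `|w - v| * e)%R.
  apply: le_trans (dot_bound _ _) _; rewrite nz; apply: ler_wpM2r; first exact: ltW.
  exact: sabs_le.
have hdel : ((n%:R + 1) * `|w - v| * e < m)%R.
  have hpos : (0 < (n%:R + 1) * e)%R by rewrite mulr_gt0 // ltr_wpDl.
  move: hw; rewrite ltr_pdivlMr //.
  by have -> : ((n%:R + 1) * `|w - v| * e = `|w - v| * ((n%:R + 1) * e))%R by ring.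
have hx : (dotv (w - v) (z - qs) = lam * dotv q w - lam * dotv q v - lam * dotv qs w + lam * dotv qs v)%R.
  rewrite zq dotvZr dotvBl !dotvBr !(dotvC w) !(dotvC v); ring.
have hzv : (dotv z v = lam * dotv q v + (1 - lam) * dotv qs v)%R.
  by rewrite /z dotvDl !dotvZl.
move: (ler_norm (dotv (w - v) (z - qs))) => hn.
move: h1 h2 h3; case: (H z) => [h| |] //=.
  rewrite -EFinD -!EFinM -EFinD !lte_fin !lee_fin => h1 h2 h3.
  have h3' := ler_wpM2l (ltW lam0) h3.
  exact: (arith_key h1 h2 h3' hx hzv hn hb hdel).
Qed.
End F.
End Mod_F.
Import Mod_F.
Module Mod_G.
Local Open Scope ereal_scope.
Section G.
Variables (R : realType) (n : nat).
Notation V := 'rV[R]_n.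

Lemma grad_conj (H : V -> \bar R) (v qs : V) : legendre H ->
  interior (edom (lfconj H)) v ->
  H qs = (dotv qs v - fine (lfconj H v))%:E -> grad (lfconj H) v = qs.
Proof.
move=> LH vi Hqs; have [[pH cH lH] _] := LH.
have GH : Gamma0 H := LH.1.
have vd : edom (lfconj H) v := interior_subset vi.
suff D : 'd (freal (lfconj H)) v = dotl qs :> (V -> R).
  by apply/rowP => i; rewrite /grad mxE D /dotl dotv_delta.
apply: diff_unique; first exact: dotl_continuous.
apply/eqaddoP => e e0.
have [del0 del00 Bd] := interior_ball (nbhs_interior vi).
have en0 : (0 < e / (n%:R + 1))%R by rewrite divr_gt0 // ltr_wpDl.
have [del1 del10 Hc] := argmin_cont LH vi Hqs en0.
near=> h.
have hd : (`|h| < Order.min del0 del1)%R.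
  by near: h; apply: (nbhs0_lt (V:=V)); rewrite lt_min del00 del10.
move: hd; rewrite lt_min => /andP[hd0 hd1].
set w := (h + v)%R.
have hwv : (w - v = h)%R by rewrite /w addrK.
have wi : interior (edom (lfconj H)) w by apply: Bd; rewrite hwv ltW.
have wd : edom (lfconj H) w := interior_subset wi.
have [qw Hqw] := argmin_exists GH wi.
have cq : (`|qw - qs| <= e / (n%:R + 1))%R by apply: (Hc w qw) => //; rewrite hwv.
rewrite /= -/w /freal.
set fw := fine (lfconj H w) in Hqw *.
set sv := fine (lfconj H v) in Hqs *.
have a := FY_real qs pH wd; rewrite Hqs -/fw lee_fin in a.
have b := FY_real qw pH vd; rewrite Hqw -/sv lee_fin in b.
have hb : (`|dotv h (qw - qs)| <= e * `|h|)%R.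
  apply: le_trans (dot_bound _ _) _.
  apply: le_trans (_ : (n%:R + 1) * `|h| * (e / (n%:R + 1)) <= _)%R.
    by apply: ler_pM => //; [exact: sabs_ge0 | exact: sabs_le].
  by rewrite mulrC mulrA divfK // gt_eqF // ltr_wpDl.
have e1 : (dotv h (qw - qs) = dotv qw w - dotv qw v - (dotv qs w - dotv qs v))%R.
  by rewrite dotvBr (dotvC h) (dotvC h) -hwv !dotvBr.
have e2 : (dotl qs h = dotv qs w - dotv qs v)%R by rewrite /dotl -hwv dotvBr.
rewrite !fctE /= -/w -/fw e2; apply: le_trans hb; rewrite e1.
rewrite ger0_norm; last by lra.
apply: le_trans (ler_norm _); lra.
Unshelve. all: by end_near. Qed.
End G.
End Mod_G.
Import Mod_G.
Module Mod_M1.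
Section M.
Variables (R : realType).

Lemma ereal_squeeze (f : R -> \bar R) (s A B : R) :
  (forall t, (0 < t)%R -> ((A + t * s)%:E <= f t)%E /\ (f t <= (B + t * s)%:E)%E) ->
  (f t * (t^-1)%:E)%E @[t --> +oo] --> s%:E.
Proof.
move=> hf; apply: cvg_EFin.
  near=> t; have t0 : (0 < t)%R by near: t; apply: nbhs_pinfty_gt.
  have [h1 h2] := hf t t0; rewrite fin_numM //.
  by rewrite fin_numElt (lt_le_trans _ h1) ?ltNyr // (le_lt_trans h2) ?ltry.
apply/cvgrPdist_le => eps eps0.
near=> t.
have t0 : (0 < t)%R by near: t; apply: nbhs_pinfty_gt.
have tK : ((`|A| + `|B|) / eps < t)%R by near: t; apply: nbhs_pinfty_gt; exact: num_real.
have [h1 h2] := hf t t0.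
have ff : f t \is a fin_num.
  by rewrite fin_numElt (lt_le_trans _ h1) ?ltNyr // (le_lt_trans h2) ?ltry.
rewrite /= -(fineK ff) -EFinM /=.
rewrite -(fineK ff) !lee_fin in h1 h2.
have -> : (s - fine (f t) * t^-1 = (t * s - fine (f t)) / t)%R by field; rewrite gt_eqF.
rewrite normrM normfV (gtr0_norm t0) ler_pdivrMr //.
apply: le_trans (_ : `|A| + `|B| <= _)%R.
  rewrite ler_norml; apply/andP; split.
    have := ler_norm B; have := ler_norm A; have := normr_ge0 A; lra.
  have := ler_norm (- A)%R; rewrite normrN; have := normr_ge0 B; lra.
by move: tK; rewrite ltr_pdivrMr // mulrC => /ltW.
Unshelve. all: by end_near. Qed.
End M.
End Mod_M1.
Import Mod_M1.
Theorem mainTheorem8 (R : realType) (n : nat) (J H : 'rV[R]_n -> \bar R)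
  (v0 d : 'rV[R]_n) :
  Gamma0 J -> Gamma0 H -> coercive1 J -> legendre H ->
  interior (edom (lfconj H)) v0 -> edom J d ->
  let S := fun (x : 'rV[R]_n) (t : R) =>
    ereal_inf [set (J (x - t *: v)%R + t%:E * lfconj H v)%E | v in [set: 'rV[R]_n]] in
  let F := fun (x : 'rV[R]_n) (t : R) =>
    ereal_inf [set (t%:E * bregman (lfconj H) (t^-1 *: x) v
                    + lfconj J (grad (lfconj H) v))%E
              | v in interior (edom (lfconj H))] in
  ((S (d + t *: v0)%R t * (t^-1)%:E)%E @[t --> +oo] --> lfconj H v0)
  /\ (edom J 0 ->
      (F (t *: v0) t * (t^-1)%:E)%E @[t --> +oo] --> (0 : \bar R)).
Proof.
move=> GJ GH cJ LH v0i dJ S F.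
have [pJ _ _] := GJ; have [pH _ _] := GH.
have v0d : edom (lfconj H) v0 := interior_subset v0i.
have [qs Hqs] := argmin_exists GH v0i.
set s0 := fine (lfconj H v0) in Hqs.
have f0 : lfconj H v0 = s0%:E by rewrite fineK // conj_fin.
have cf : lfconj J qs \is a fin_num by apply: conj_fin => //; exact: conj_finite.
set c := fine (lfconj J qs).
have c0 : lfconj J qs = c%:E by rewrite fineK.
split.
- rewrite f0; apply: (@ereal_squeeze R _ s0 (dotv qs d - c) (fine (J d))).
  move=> t t0; split.
  + apply: le_ereal_inf_tmp => _ [v _ <-].
    set y := (d + t *: v0 - t *: v)%R.
    have fj := fenchel_young J y qs; rewrite c0 in fj.
    have fh := fenchel_young H qs v; rewrite Hqs in fh.
    have hy : dotv y qs = (dotv d qs + t * dotv v0 qs - t * dotv v qs)%R.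
      by rewrite /y dotvBl dotvDl !dotvZl.
    have hninf := conj_gt_ninf v pH.
    have jninf := proper_ninf y pJ.
    move: fj fh hninf jninf.
    case: (J y) => [j| |] //; case: (lfconj H v) => [h| |] //.
    * move=> fj fh _ _; move: fj fh; rewrite -!EFinB -EFinM -EFinD !lee_fin => fj fh.
      have fh' := ler_wpM2l (ltW t0) fh.
      rewrite (dotvC qs v) (dotvC qs v0) in fh'; rewrite (dotvC qs d).
      nra.
    * by move=> *; rewrite gt0_muley ?lte_fin // addey // leey.
    * by move=> *; rewrite -EFinM addye // leey.
    * by move=> *; rewrite gt0_muley ?lte_fin // addye // leey.
  + apply: ge_ereal_inf; exists ((J d) + t%:E * s0%:E)%E.
      by exists v0 => //; rewrite f0 addrK.
    have jd : J d = (fine (J d))%:E.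
      by rewrite fineK // fin_numElt dJ andbT ltNye proper_ninf.
    by rewrite jd -EFinM -EFinD.
- move=> J0.
  have j0 : J 0%R = (fine (J 0%R))%:E.
    by rewrite fineK // fin_numElt J0 andbT ltNye proper_ninf.
  apply: (@ereal_squeeze R _ 0 (- fine (J 0%R)) c).
  move=> t t0; rewrite mulr0 !addr0; split.
  + apply: le_ereal_inf_tmp => _ [v vi <-].
    have vd : edom (lfconj H) v := interior_subset vi.
    have [qv Hqv] := argmin_exists GH vi.
    have fv : lfconj H v = (fine (lfconj H v))%:E by rewrite fineK // conj_fin.
    rewrite /bregman (grad_conj LH vi Hqv) scalerA mulVf ?gt_eqF // scale1r f0 fv.
    have fh := fenchel_young H qv v0; rewrite Hqv f0 -EFinD lee_fin in fh.
    have fj := fenchel_young J 0%R qv; rewrite j0 dotv0l sub0e in fj.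
    rewrite -!EFinB -EFinM; apply: lee_paddl => //.
    by rewrite lee_fin mulr_ge0 // ?(ltW t0) // dotvBr; lra.
  + apply: ge_ereal_inf; exists (t%:E * bregman (lfconj H) (t^-1 *: (t *: v0)) v0 + lfconj J (grad (lfconj H) v0))%E.
      by exists v0.
    rewrite /bregman (grad_conj LH v0i Hqs) scalerA mulVf ?gt_eqF // scale1r subrr dotv0r.
    by rewrite f0 c0 -!EFinB subrr subr0 mule0 add0e.
Qed.
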